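(* For positive integers $p,m$ and real $\alpha>0$, $$\Big((-1)^{m-1}-(-1)^{p-1}\Big)\sum_{n=1}^\infty\frac{H_{n+2\alpha}}{(n+\alpha)^{p+m}}=\Big((-1)^{m-1}-(-1)^{p-1}\Big)H_\alpha\,\zeta(p+m,\alpha+1)+\sum_{i=1}^{p-1}(-1)^{i-1}\zeta(p+1-i,\alpha+1)\,\zeta(m+i,\alpha+1)-\sum_{i=1}^{m-1}(-1)^{i-1}\zeta(m+1-i,\alpha+1)\,\zeta(p+i,\alpha+1).$$ In particular $\sum_{n\ge1}\frac{H_{n+2\alpha}}{(n+\alpha)^3}=H_\alpha\zeta(3,\alpha+1)+\frac12\zeta(2,\alpha+1)^2$.
   Context: $H_\alpha := \sum_{k=1}^\infty\left(\frac1k-\frac1{k+\alpha}\right)$ for real $\alpha$ not a negative integer. $\zeta(s,\alpha+1)=\sum_{n=1}^\infty (n+\alpha)^{-s}$ is the Hurwitz zeta function. Empty sums are $0$. *)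

(* Defs.v *)
From Stdlib Require Import Reals Lra List ClassicalEpsilon.
Open Scope R_scope.

(* Value of a convergent series sum_{k>=0} f k (chosen via classical epsilon;
   arbitrary if the series diverges). *)
Definition series (f : nat -> R) : R :=
  epsilon (inhabits 0%R) (fun l => infinite_sum f l).

Definition Hharm (alpha : R) : R :=
  series (fun k => 1 / INR (S k) - 1 / (INR (S k) + alpha)).

(* Hurwitz zeta  zeta(s, alpha+1) = sum_{n>=1} (n+alpha)^(-s), s a natural number *)
Definition hzeta (s : nat) (alpha : R) : R :=
  series (fun k => 1 / (INR (S k) + alpha) ^ s).

(* finite sum  sum_{i=a}^{b} f i  (empty sum = 0 if b < a) *)
Definition fsum (a b : nat) (f : nat -> R) : R :=
  fold_right Rplus 0 (map f (seq a (S b - a))).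

(* Main.v *)
Require Import Defs.
From Stdlib Require Import Reals Lra Lia List ClassicalEpsilon Arith.
Open Scope R_scope.

Lemma series_spec f : (exists l, infinite_sum f l) -> infinite_sum f (series f).
Proof. intro H. unfold series. apply epsilon_spec. exact H. Qed.

Lemma series_eq f l : infinite_sum f l -> series f = l.
Proof. intro H. apply (uniqueness_sum f); [|exact H]. apply series_spec. eauto. Qed.

Lemma is_ext f g l : (forall k, f k = g k) -> infinite_sum f l -> infinite_sum g l.
Proof.
  intros E H eps He. destruct (H eps He) as [N HN]. exists N. intros n Hn.
  rewrite <- (sum_eq f g n) by (intros; apply E). apply HN; auto.
Qed.

Lemma is_minus f g a b : infinite_sum f a -> infinite_sum g b ->
  infinite_sum (fun k => f k - g k) (a - b).
Proof.
  intros Hf Hg eps He. destruct (CV_minus _ _ _ _ Hf Hg eps He) as [N HN].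
  exists N. intros n Hn. rewrite minus_sum. apply HN; auto.
Qed.

Lemma is_plus f g a b : infinite_sum f a -> infinite_sum g b ->
  infinite_sum (fun k => f k + g k) (a + b).
Proof.
  intros Hf Hg eps He. destruct (CV_plus _ _ _ _ Hf Hg eps He) as [N HN].
  exists N. intros n Hn. rewrite sum_plus. apply HN; auto.
Qed.

Lemma cv_const c : Un_cv (fun _ => c) c.
Proof. intros eps He. exists 0%nat. intros. rewrite R_dist_eq. lra. Qed.

Lemma is_scal c f a : infinite_sum f a -> infinite_sum (fun k => c * f k) (c * a).
Proof.
  intros Hf eps He. destruct (CV_mult _ _ _ _ (cv_const c) Hf eps He) as [N HN].
  exists N. intros n Hn. rewrite <- (sum_eq (fun k => f k * c)) by (intros; ring).
  rewrite <- scal_sum. apply HN; auto.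
Qed.

Lemma lim_le_bound f l B : infinite_sum f l -> (forall N, sum_f_R0 f N <= B) -> l <= B.
Proof. intros H HB. apply (Rle_cv_lim HB H (cv_const B)). Qed.

Lemma lim_le f g a b : infinite_sum f a -> infinite_sum g b -> (forall k, f k <= g k) -> a <= b.
Proof. intros Hf Hg H. apply (Rle_cv_lim (fun N => sum_Rle f g N (fun n _ => H n)) Hf Hg). Qed.

Lemma lim_nonneg f a : infinite_sum f a -> (forall k, 0 <= f k) -> 0 <= a.
Proof. intros H Hp. apply Rle_trans with (f 0%nat); [auto|]. apply (sum_incr f 0 a H Hp). Qed.

Lemma psum_le f l N : infinite_sum f l -> (forall k, 0 <= f k) -> sum_f_R0 f N <= l.
Proof. intros; apply sum_incr; auto. Qed.

Lemma conv_bound f B : (forall k, 0 <= f k) -> (forall N, sum_f_R0 f N <= B) ->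
  exists l, infinite_sum f l.
Proof.
  intros Hp HB. apply Un_cv_crit.
  - intro n. simpl. specialize (Hp (S n)). lra.
  - exists B. intros x [i ->]. apply HB.
Qed.

Lemma base_sum N : sum_f_R0 (fun k => / (INR (S k)) ^ 2) N <= 2 - / INR (S N).
Proof.
  induction N.
  - simpl. lra.
  - rewrite tech5. rewrite (S_INR (S N)). rewrite (S_INR N) in *.
    assert (0 <= INR N) by apply pos_INR.
    revert IHN H. generalize (INR N) (sum_f_R0 (fun k => / INR (S k) ^ 2) N). intros u sm IHN H.
    assert (/ (u + 1 + 1) ^ 2 + / (u + 1 + 1) <= / (u + 1)).
    { replace (/ (u + 1 + 1) ^ 2 + / (u + 1 + 1)) with ((u+3) / (u+2)^2) by (field; lra).
      assert (E : / (u + 1) - (u+3) / (u+2)^2 = / ((u+1) * (u+2)^2)) by (field; lra).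
      assert (0 < / ((u+1) * (u+2)^2)) by (apply Rinv_0_lt_compat; apply Rmult_lt_0_compat; [lra | apply pow_lt; lra]).
      lra. }
    lra.
Qed.

Lemma dom_conv f M : 0 <= M -> (forall k, 0 <= f k <= M * / (INR (S k)) ^ 2) ->
  exists l, infinite_sum f l.
Proof.
  intros HM H. apply (conv_bound f (M * 2)).
  - intro k; apply H.
  - intro N. apply Rle_trans with (sum_f_R0 (fun k => / (INR (S k)) ^ 2 * M) N).
    + apply sum_Rle. intros n _. rewrite Rmult_comm. apply H.
    + rewrite <- scal_sum. apply Rmult_le_compat_l; auto.
      apply Rle_trans with (1 := base_sum N).
      assert (0 < / INR (S N)) by (apply Rinv_0_lt_compat, lt_0_INR; lia). lra.
Qed.

Lemma sum_exchange (a : nat -> nat -> R) N K :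
  sum_f_R0 (fun n => sum_f_R0 (fun k => a n k) K) N =
  sum_f_R0 (fun k => sum_f_R0 (fun n => a n k) N) K.
Proof.
  induction N.
  - simpl. reflexivity.
  - simpl sum_f_R0 at 1. rewrite IHN.
    rewrite <- sum_plus. apply sum_eq. intros. simpl. reflexivity.
Qed.

Lemma cv_finsum (F : nat -> nat -> R) r N : (forall n, Un_cv (F n) (r n)) ->
  Un_cv (fun K => sum_f_R0 (fun n => F n K) N) (sum_f_R0 r N).
Proof.
  intro H. induction N.
  - simpl. apply H.
  - simpl. apply CV_plus; auto.
Qed.

Lemma half (a : nat -> nat -> R) r c C :
  (forall n, infinite_sum (a n) (r n)) ->
  (forall k N, sum_f_R0 (fun n => a n k) N <= c k) ->
  (forall K, sum_f_R0 c K <= C) ->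
  forall N, sum_f_R0 r N <= C.
Proof.
  intros Hr Hc HC N.
  assert (Hcv := cv_finsum (fun n K => sum_f_R0 (a n) K) r N Hr).
  refine (Rle_cv_lim _ Hcv (cv_const C)).
  intro K. simpl. eapply Rle_trans; [apply Req_le; exact (sum_exchange a N K)|].
  apply Rle_trans with (sum_f_R0 c K); auto.
  apply sum_Rle; intros; auto.
Qed.

Lemma fubini (a : nat -> nat -> R) r Sm :
  (forall n k, 0 <= a n k) ->
  (forall n, infinite_sum (a n) (r n)) -> infinite_sum r Sm ->
  exists c, (forall k, infinite_sum (fun n => a n k) (c k)) /\ infinite_sum c Sm.
Proof.
  intros Hp Hr HS.
  assert (Hrp : forall n, 0 <= r n) by (intro n; apply (lim_nonneg (a n)); auto).
  assert (Hank : forall n k, a n k <= r n).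
  { intros n k. apply Rle_trans with (sum_f_R0 (a n) k).
    - destruct k; simpl. lra. assert (0 <= sum_f_R0 (a n) k).
      { apply cond_pos_sum. auto. } specialize (Hp n (S k)). lra.
    - apply psum_le; auto. }
  assert (Hc : forall k, infinite_sum (fun n => a n k) (series (fun n => a n k))).
  { intro k. apply series_spec. apply (conv_bound _ Sm); auto.
    intro N. apply Rle_trans with (sum_f_R0 r N).
    - apply sum_Rle; auto.
    - apply psum_le; auto. }
  set (c := fun k => series (fun n => a n k)) in *.
  assert (HcK : forall K, sum_f_R0 c K <= Sm).
  { apply (half (fun k n => a n k) c r Sm Hc).
    - intros n N. apply psum_le; auto.
    - intro N. apply psum_le; auto. }
  assert (Hcp : forall k, 0 <= c k) by (intro k; apply (lim_nonneg _ _ (Hc k)); auto).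
  destruct (conv_bound c Sm Hcp HcK) as [C HC].
  exists c. split; auto.
  replace Sm with C; auto.
  apply Rle_antisym.
  - apply (lim_le_bound c); auto.
  - apply (lim_le_bound r); auto. apply (half a r c C Hr).
    + intros k N. apply psum_le; auto.
    + intro K. apply psum_le; auto.
Qed.

Definition xx (al : R) (k : nat) : R := INR (S k) + al.
Arguments xx : simpl never.

Section Conc.
Variable al : R.
Hypothesis hal : 0 < al.

Lemma INRS_pos k : 1 <= INR (S k).
Proof. rewrite S_INR. assert (0 <= INR k) by apply pos_INR. lra. Qed.

Lemma xx_ge1 k : 1 <= xx al k.
Proof. unfold xx. pose proof (INRS_pos k). lra. Qed.
Lemma xx_pos k : 0 < xx al k.
Proof. pose proof (xx_ge1 k). lra. Qed.
Lemma xx_geS k : INR (S k) <= xx al k.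
Proof. unfold xx. lra. Qed.

Lemma e_le k : / (xx al k) ^ 2 <= / INR (S k) ^ 2.
Proof.
  apply Rinv_le_contravar. apply pow_lt. pose proof (INRS_pos k); lra.
  apply pow_incr. pose proof (INRS_pos k). split; [lra|]. apply xx_geS.
Qed.

Lemma inv_pos x : 0 < x -> 0 <= / x.
Proof. intro; left; apply Rinv_0_lt_compat; auto. Qed.

Definition z (s : nat) (k : nat) := 1 / (xx al k) ^ s.
Definition Zh (s : nat) := series (z s).

Lemma z_bound s k : (2 <= s)%nat -> 0 <= z s k <= / (xx al k) ^ 2.
Proof.
  intro Hs. unfold z, Rdiv. rewrite Rmult_1_l. pose proof (xx_pos k). split.
  - apply inv_pos, pow_lt; auto.
  - apply Rinv_le_contravar. apply pow_lt; auto. apply Rle_pow; auto. apply xx_ge1.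
Qed.

Lemma z_sum s : (2 <= s)%nat -> infinite_sum (z s) (Zh s).
Proof.
  intro Hs. apply series_spec. apply (dom_conv _ 1). lra.
  intro k. destruct (z_bound s k Hs). split; auto. rewrite Rmult_1_l.
  eapply Rle_trans; [eauto| apply e_le].
Qed.

Lemma Z_nonneg s : (2 <= s)%nat -> 0 <= Zh s.
Proof. intro Hs. apply (lim_nonneg (z s)). apply z_sum; auto. intro; apply z_bound; auto. Qed.

Definition tm (a b : nat) (n k : nat) :=
  1 / ((xx al n) ^ a * (xx al k) ^ b * (xx al n + xx al k)).
Definition I (a b n : nat) := series (tm a b n).
Definition T (a b : nat) := series (I a b).

Definition cond (a b : nat) := (1 <= a)%nat /\ (1 <= b)%nat /\ (3 <= a + b)%nat.

Lemma tm_bound a b n k : cond a b ->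
  0 <= tm a b n k <= / (xx al n) ^ 2 * / (xx al k) ^ 2.
Proof.
  intros [Ha [Hb Hab]]. pose proof (xx_ge1 n). pose proof (xx_ge1 k).
  set (xn := xx al n) in *. set (xk := xx al k) in *.
  unfold tm. fold xn xk. unfold Rdiv. rewrite Rmult_1_l. rewrite <- Rinv_mult.
  assert (0 < xn ^ 2 * xk ^ 2) by (apply Rmult_lt_0_compat; apply pow_lt; lra).
  assert (xn ^ 2 * xk ^ 2 <= xn ^ a * xk ^ b * (xn + xk)).
  { destruct (Nat.eq_dec a 1) as [->|Ha2].
    - assert (xk ^ 2 <= xk ^ b) by (apply Rle_pow; lia || lra).
      replace (xn ^ 2 * xk ^ 2) with (xn * xk ^ 2 * xn) by ring.
      apply Rmult_le_compat. 
      + apply Rmult_le_pos; [lra| apply pow_le; lra].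
      + lra.
      + rewrite pow_1. apply Rmult_le_compat_l; lra.
      + lra.
    - assert (xn ^ 2 <= xn ^ a) by (apply Rle_pow; lia || lra).
      assert (xk <= xk ^ b) by (rewrite <- (pow_1 xk) at 1; apply Rle_pow; lia || lra).
      replace (xn ^ 2 * xk ^ 2) with (xn ^ 2 * xk * xk) by ring.
      apply Rmult_le_compat.
      + apply Rmult_le_pos; [apply pow_le| ]; lra.
      + lra.
      + apply Rmult_le_compat; try lra. apply pow_le; lra.
      + lra. }
  split.
  - apply inv_pos. lra.
  - apply Rinv_le_contravar; auto.
Qed.

Lemma I_sum a b n : cond a b -> infinite_sum (tm a b n) (I a b n).
Proof.
  intro Hc. apply series_spec. apply (dom_conv _ (/ (xx al n) ^ 2)).
  apply inv_pos, pow_lt, xx_pos.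
  intro k. destruct (tm_bound a b n k Hc). split; auto.
  eapply Rle_trans; [eauto|]. apply Rmult_le_compat_l. apply inv_pos, pow_lt, xx_pos.
  apply e_le.
Qed.

Lemma I_bound a b n : cond a b -> 0 <= I a b n <= / (xx al n) ^ 2 * Zh 2.
Proof.
  intro Hc. split.
  - apply (lim_nonneg (tm a b n)). apply I_sum; auto. intro k; apply tm_bound; auto.
  - apply (lim_le (tm a b n) (fun k => / (xx al n) ^ 2 * z 2 k)).
    apply I_sum; auto. apply is_scal, z_sum; auto.
    intro k. destruct (tm_bound a b n k Hc). unfold z, Rdiv. rewrite Rmult_1_l. auto.
Qed.

Lemma T_sum a b : cond a b -> infinite_sum (I a b) (T a b).
Proof.
  intro Hc. apply series_spec. apply (dom_conv _ (Zh 2)). apply Z_nonneg; auto.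
  intro n. destruct (I_bound a b n Hc). split; auto.
  eapply Rle_trans; [eauto|]. rewrite Rmult_comm. apply Rmult_le_compat_l.
  apply Z_nonneg; auto. apply e_le.
Qed.

Lemma T_sym a b : cond a b -> cond b a -> T a b = T b a.
Proof.
  intros Hab Hba.
  destruct (fubini (tm a b) (I a b) (T a b)) as [c [Hc HcS]].
  - intros; apply tm_bound; auto.
  - intro n; apply I_sum; auto.
  - apply T_sum; auto.
  - symmetry. apply series_eq. apply (is_ext c); auto.
    intro k. symmetry. apply series_eq. apply (is_ext (fun n => tm a b n k)); auto.
    intro n. unfold tm. f_equal. ring.
Qed.

Lemma T_rec q m : (1 <= q)%nat -> (1 <= m)%nat ->
  T (S q) m = Zh (S q) * Zh (S m) - T q (S m).
Proof.
  intros Hq Hm.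
  assert (C1 : cond (S q) m) by (unfold cond; lia).
  assert (C2 : cond q (S m)) by (unfold cond; lia).
  assert (HI : forall n, I (S q) m n = z (S q) n * Zh (S m) - I q (S m) n).
  { intro n. apply series_eq.
    apply (is_ext (fun k => z (S q) n * z (S m) k - tm q (S m) n k)).
    - intro k. unfold z, tm. pose proof (xx_pos n). pose proof (xx_pos k).
      rewrite <- !tech_pow_Rmult. field.
      repeat split; try apply pow_nonzero; lra.
    - apply is_minus. apply is_scal, z_sum; lia. apply I_sum; auto. }
  apply series_eq. apply (is_ext (fun n => Zh (S m) * z (S q) n - I q (S m) n)).
  - intro n. rewrite HI. ring.
  - replace (Zh (S q) * Zh (S m)) with (Zh (S m) * Zh (S q)) by ring.
    apply is_minus. apply is_scal, z_sum; lia. apply T_sum; auto.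
Qed.

End Conc.

Lemma Z_hz al s : Zh al s = hzeta s al.
Proof. reflexivity. Qed.

Lemma fsum_S1 j f : fsum 1 (S j) f = f 1%nat + fsum 1 j (fun i => f (S i)).
Proof.
  unfold fsum. replace (S (S j) - 1)%nat with (S j) by lia.
  replace (S j - 1)%nat with j by lia. simpl. f_equal.
  rewrite <- seq_shift, map_map. reflexivity.
Qed.

Lemma fsum_ext a b f g : (forall i, (a <= i <= b)%nat -> f i = g i) -> fsum a b f = fsum a b g.
Proof.
  intro H. unfold fsum. f_equal. apply map_ext_in. intros i Hi.
  apply in_seq in Hi. apply H. lia.
Qed.

Lemma fold_opp (l : list R) : fold_right Rplus 0 (map (fun x => - x) l) = - fold_right Rplus 0 l.
Proof. induction l; simpl; [ring| rewrite IHl; ring]. Qed.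

Lemma fsum_opp a b f : fsum a b (fun i => - f i) = - fsum a b f.
Proof. unfold fsum. rewrite <- (map_map f (fun x => -x)). apply fold_opp. Qed.

Lemma Lrec al (hal : 0 < al) : forall q m, (1 <= q)%nat -> (1 <= m)%nat -> (3 <= q + m)%nat ->
  T al q m = fsum 1 (q - 1) (fun i => (-1) ^ (i - 1) * hzeta (q + 1 - i) al * hzeta (m + i) al)
             + (-1) ^ (q - 1) * T al 1 (q + m - 1).
Proof.
  induction q as [|q IH]; intros m Hq Hm Hqm; [lia|].
  destruct (Nat.eq_dec q 0) as [->|Hq0].
  - replace (1 + m - 1)%nat with m by lia. unfold fsum. simpl. ring.
  - rewrite (T_rec al hal q m) by lia.
    rewrite (IH (S m)) by lia.
    destruct q as [|j]; [lia|].
    replace (S (S j) - 1)%nat with (S j) by lia.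
    replace (S j - 1)%nat with j by lia.
    replace (S j + S m - 1)%nat with (S (S j) + m - 1)%nat by lia.
    rewrite fsum_S1.
    replace (S (S j) + 1 - 1)%nat with (S (S j)) by lia.
    replace (m + 1)%nat with (S m) by lia.
    rewrite (fsum_ext 1 j (fun i => (-1) ^ (S i - 1) * hzeta (S (S j) + 1 - S i) al * hzeta (m + S i) al)
       (fun i => - ((-1) ^ (i - 1) * hzeta (S j + 1 - i) al * hzeta (S m + i) al))).
    + rewrite fsum_opp. rewrite !Z_hz. simpl pow. ring.
    + intros i Hi. destruct i as [|i]; [lia|].
      replace (S (S j) + 1 - S (S i))%nat with (S j + 1 - S i)%nat by lia.
      replace (m + S (S i))%nat with (S m + S i)%nat by lia.
      replace (S (S i) - 1)%nat with (S i) by lia.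
      replace (S i - 1)%nat with i by lia. simpl pow. ring.
Qed.

Lemma H_sum be : 0 < be ->
  infinite_sum (fun j => 1 / INR (S j) - 1 / (INR (S j) + be)) (Hharm be).
Proof.
  intro hb. apply series_spec. apply (dom_conv _ be). lra.
  intro j. pose proof (INRS_pos j). generalize (INR (S j)) H. intros u Hu.
  replace (1 / u - 1 / (u + be)) with (be * / (u * (u + be))) by (field; lra).
  split.
  - apply Rmult_le_pos; [lra|]. apply inv_pos. nra.
  - apply Rmult_le_compat_l; [lra|]. apply Rinv_le_contravar. nra. simpl. nra.
Qed.

Lemma lhs_sum al (hal : 0 < al) s : (2 <= s)%nat ->
  infinite_sum (fun n => Hharm (INR (S n) + 2 * al) / (INR (S n) + al) ^ (S s))
     (Hharm al * Zh al (S s) + T al s 1).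
Proof.
  intro Hs. assert (Cd : cond s 1) by (unfold cond; lia).
  assert (HP : forall n, Hharm (INR (S n) + 2 * al) / (INR (S n) + al) ^ (S s)
             = Hharm al * z al (S s) n + I al s 1 n).
  { intro n. pose proof (INRS_pos n).
    apply (uniqueness_sum (fun j => / (xx al n) ^ (S s) * (1 / INR (S j) - 1 / (INR (S j) + (INR (S n) + 2 * al))))).
    - replace (Hharm (INR (S n) + 2 * al) / (INR (S n) + al) ^ S s)
        with (/ (xx al n) ^ (S s) * Hharm (INR (S n) + 2 * al)) by (unfold xx, Rdiv; ring).
      apply is_scal. apply H_sum. lra.
    - apply (is_ext (fun j => z al (S s) n * (1 / INR (S j) - 1 / (INR (S j) + al)) + tm al s 1 n j)).
      + intro j. pose proof (INRS_pos j). unfold z, tm, xx.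
        rewrite <- tech_pow_Rmult. rewrite pow_1.
        assert ((INR (S n) + al) ^ s <> 0) by (apply pow_nonzero; lra).
        field. repeat split; lra.
      + rewrite (Rmult_comm (Hharm al)). apply is_plus. apply is_scal. apply H_sum; auto. apply I_sum; auto. }
  apply (is_ext (fun n => Hharm al * z al (S s) n + I al s 1 n)).
  - intro n; symmetry; apply HP.
  - apply is_plus. apply is_scal. apply z_sum; auto. apply T_sum; auto.
Qed.

Theorem mainTheorem19 :
  (forall (p m : nat) (alpha : R), (1 <= p)%nat -> (1 <= m)%nat -> 0 < alpha ->
    ((-1) ^ (m - 1) - (-1) ^ (p - 1)) *
      series (fun k => Hharm (INR (S k) + 2 * alpha) / (INR (S k) + alpha) ^ (p + m))
    = ((-1) ^ (m - 1) - (-1) ^ (p - 1)) * Hharm alpha * hzeta (p + m) alpha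
      + fsum 1 (p - 1) (fun i => (-1) ^ (i - 1) * hzeta (p + 1 - i) alpha * hzeta (m + i) alpha)
      - fsum 1 (m - 1) (fun i => (-1) ^ (i - 1) * hzeta (m + 1 - i) alpha * hzeta (p + i) alpha))
  /\
  (forall alpha : R, 0 < alpha ->
    series (fun k => Hharm (INR (S k) + 2 * alpha) / (INR (S k) + alpha) ^ 3)
    = Hharm alpha * hzeta 3 alpha + / 2 * (hzeta 2 alpha) ^ 2).
Proof.
  assert (P1 : forall (p m : nat) (alpha : R), (1 <= p)%nat -> (1 <= m)%nat -> 0 < alpha ->
    ((-1) ^ (m - 1) - (-1) ^ (p - 1)) *
      series (fun k => Hharm (INR (S k) + 2 * alpha) / (INR (S k) + alpha) ^ (p + m))
    = ((-1) ^ (m - 1) - (-1) ^ (p - 1)) * Hharm alpha * hzeta (p + m) alpha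
      + fsum 1 (p - 1) (fun i => (-1) ^ (i - 1) * hzeta (p + 1 - i) alpha * hzeta (m + i) alpha)
      - fsum 1 (m - 1) (fun i => (-1) ^ (i - 1) * hzeta (m + 1 - i) alpha * hzeta (p + i) alpha)).
  { intros p m al Hp Hm hal.
    destruct (le_lt_dec (p + m) 2) as [Hle|Hlt].
    - assert (p = 1%nat) by lia. assert (m = 1%nat) by lia. subst.
      unfold fsum. simpl. ring.
    - pose proof (Lrec al hal p m Hp Hm ltac:(lia)) as L1.
      pose proof (Lrec al hal m p Hm Hp ltac:(lia)) as L2.
      replace (m + p - 1)%nat with (p + m - 1)%nat in L2 by lia.
      rewrite (T_sym al hal m p) in L2 by (unfold cond; lia).
      assert (E : T al (p + m - 1) 1 = T al 1 (p + m - 1))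
        by (apply T_sym; auto; unfold cond; lia).
      replace (p + m)%nat with (S (p + m - 1)) by lia.
      rewrite (series_eq _ _ (lhs_sum al hal (p + m - 1) ltac:(lia))).
      rewrite Z_hz, E.
      set (T1 := T al 1 (p + m - 1)) in *.
      set (F1 := fsum 1 (p - 1) _) in *.
      set (F2 := fsum 1 (m - 1) _) in *.
      assert (E1 : F1 = T al p m - (-1) ^ (p - 1) * T1) by lra.
      assert (E2 : F2 = T al p m - (-1) ^ (m - 1) * T1) by lra.
      rewrite E1, E2. ring. }
  split; [exact P1|].
  intros al hal. pose proof (P1 1%nat 2%nat al ltac:(lia) ltac:(lia) hal) as H.
  change (((-1) ^ 1 - (-1) ^ 0) *
      series (fun k => Hharm (INR (S k) + 2 * al) / (INR (S k) + al) ^ 3)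
    = ((-1) ^ 1 - (-1) ^ 0) * Hharm al * hzeta 3 al
      + 0 - ((-1) ^ 0 * hzeta 2 al * hzeta 2 al + 0)) in H.
  set (Sr := series _) in *. simpl pow in H. simpl pow.
  lra.
Qed.
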